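(* Let $a^*_{\mathsf A},a^*_{\mathsf B}\ge1$ and $l^*_{\mathsf A},l^*_{\mathsf B}\in[0,1)$. On each mode $X\in\{\mathsf A,\mathsf B\}$ of a two-mode system apply the amplification channel with parameter $a^*_X$ followed by the loss channel with parameter $l^*_X$. The resulting product channel maps every two-mode Gaussian state to a separable state (i.e. annihilates entanglement of all two-mode Gaussian states) if and only if $$\frac1{a^*_{\mathsf A}}+\frac1{a^*_{\mathsf B}}\le1.$$
   Context: Covariance-matrix convention: vacuum has covariance matrix $\mathbb 1/2$. Loss with parameter $l\in[0,1]$: $V\mapsto(1-l)V+l\,\mathbb 1/2$. Amplification with parameter $a\ge1$: $V\mapsto aV+(a-1)\mathbb 1/2$. Separable means separable across the $\mathsf A$–$\mathsf B$ partition. *)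

(* Defs.v *)
(* Gaussian-state covariance-matrix formalism, vacuum = 1/2. *)
From HB Require Import structures.
From mathcomp Require Import all_boot all_order all_algebra.
Set Implicit Arguments. Unset Strict Implicit. Unset Printing Implicit Defensive.
Import Order.TTheory GRing.Theory Num.Theory.
Local Open Scope ring_scope.

Section Defs.
Variable R : rcfType.

Definition qform n (M : 'M[R]_n) (x : 'cV[R]_n) : R := (x^T *m M *m x) 0 0.

Definition mx_ge n (M N : 'M[R]_n) : Prop := forall x : 'cV[R]_n, 0 <= qform (M - N) x.

(* single-mode symplectic form, quadratures ordered (x, p) *)
Definition omega1 : 'M[R]_2 :=
  \matrix_(i < 2, j < 2)
    (if (i == 0 :> nat) && (j == 1 :> nat) then 1
     else if (i == 1 :> nat) && (j == 0 :> nat) then -1 else 0).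

(* two-mode symplectic form, quadratures ordered (x_A, p_A, x_B, p_B) *)
Definition omega2 : 'M[R]_(2 + 2) := block_mx omega1 0 0 omega1.

(* V is a bona fide (Gaussian-state) covariance matrix:
   V real symmetric and V + (i/2) Omega >= 0 (as a complex Hermitian matrix);
   written out on z = x + i y this is x^T V x + y^T V y - x^T Omega y >= 0. *)
Definition is_cov n (Om : 'M[R]_n) (V : 'M[R]_n) : Prop :=
  V^T = V /\
  forall x y : 'cV[R]_n, 0 <= qform V x + qform V y - (x^T *m Om *m y) 0 0.

Definition is_cov1 (V : 'M[R]_2) := is_cov omega1 V.
Definition is_cov2 (V : 'M[R]_(2 + 2)) := is_cov omega2 V.

(* Separability (A|B) of a two-mode Gaussian state with covariance matrix V
   (Werner-Wolf): there are single-mode covariance matrices gA, gB with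
   V >= gA (+) gB. *)
Definition separable2 (V : 'M[R]_(2 + 2)) : Prop :=
  exists gA gB : 'M[R]_2, is_cov1 gA /\ is_cov1 gB /\ mx_ge V (block_mx gA 0 0 gB).

Definition gchan n (X Y : 'M[R]_n) (V : 'M[R]_n) : 'M[R]_n := X *m V *m X^T + Y.

Definition local2 (tA yA tB yB : R) : 'M[R]_(2 + 2) -> 'M[R]_(2 + 2) :=
  gchan (block_mx (Num.sqrt tA)%:M 0 0 (Num.sqrt tB)%:M)
        (block_mx yA%:M 0 0 yB%:M).

Definition amp2 (aA aB : R) := local2 aA ((aA - 1) / 2) aB ((aB - 1) / 2).

Definition loss2 (lA lB : R) := local2 (1 - lA) (lA / 2) (1 - lB) (lB / 2).

End Defs.

(* Main.v *)
Require Import Defs.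
From mathcomp Require Import all_boot all_order all_algebra.
From mathcomp Require Import ring lra zify.
Import Order.TTheory GRing.Theory Num.Theory.
Local Open Scope ring_scope.

Section Helpers.
Variable R : rcfType.
Definition e4 (M : 'M[R]_(2+2)) (k l : nat) := M (inord k) (inord l).
Definition x4 (x : 'cV[R]_(2+2)) (k : nat) := x (inord k) 0.

Lemma cast_inord (i : 'I_4) : cast_ord (erefl (2+2)%N) i = inord i.
Proof. by apply/val_inj; rewrite /= inordK. Qed.

Lemma bform4 (M : 'M[R]_(2+2)) (x y : 'cV[R]_(2+2)) :
  (x^T *m M *m y) 0 0 = \sum_(i < 4) \sum_(j < 4) x4 x i * e4 M i j * x4 y j.
Proof.
rewrite mxE (reindex_inj (@cast_ord_inj (2+2) 4 erefl)) /= exchange_big.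
apply: eq_bigr => j _; rewrite mxE big_distrl /=.
rewrite (reindex_inj (@cast_ord_inj (2+2) 4 erefl)) /=.
apply: eq_bigr => i _; rewrite !mxE /x4 /e4 !cast_inord.
by rewrite mulrC mulrA.
Qed.

Lemma bform4E (M : 'M[R]_(2+2)) (x y : 'cV[R]_(2+2)) :
  (x^T *m M *m y) 0 0 =
  x4 x 0 * (e4 M 0 0 * x4 y 0 + e4 M 0 1 * x4 y 1 + e4 M 0 2 * x4 y 2 + e4 M 0 3 * x4 y 3) +
  x4 x 1 * (e4 M 1 0 * x4 y 0 + e4 M 1 1 * x4 y 1 + e4 M 1 2 * x4 y 2 + e4 M 1 3 * x4 y 3) +
  x4 x 2 * (e4 M 2 0 * x4 y 0 + e4 M 2 1 * x4 y 1 + e4 M 2 2 * x4 y 2 + e4 M 2 3 * x4 y 3) +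
  x4 x 3 * (e4 M 3 0 * x4 y 0 + e4 M 3 1 * x4 y 1 + e4 M 3 2 * x4 y 2 + e4 M 3 3 * x4 y 3).
Proof.
rewrite bform4 !big_ord_recl !big_ord0 /= /bump /=; ring.
Qed.

Lemma e4_block (A B C D : 'M[R]_2) k l : (k < 4)%N -> (l < 4)%N ->
  e4 (block_mx A B C D) k l =
  if (k < 2)%N then (if (l < 2)%N then A (inord k) (inord l) else B (inord k) (inord (l-2)))
  else (if (l < 2)%N then C (inord (k-2)) (inord l) else D (inord (k-2)) (inord (l-2))).
Proof.
move=> hk hl; rewrite /e4 /block_mx !mxE.
case: splitP => i' /=; rewrite inordK // => Hi.
- rewrite Hi ltn_ord !mxE.
  case: splitP => j' /=; rewrite inordK // => Hj.
  + rewrite Hj ltn_ord; congr (A _ _); apply/val_inj; rewrite /= inordK //.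
  + rewrite Hj ltnNge leq_addr /=; congr (B _ _); apply/val_inj; rewrite /= inordK ?addKn //.
- rewrite Hi ltnNge leq_addr /= !mxE.
  case: splitP => j' /=; rewrite inordK // => Hj.
  + rewrite Hj ltn_ord; congr (C _ _); apply/val_inj; rewrite /= inordK ?addKn //.
  + rewrite Hj ltnNge leq_addr /=; congr (D _ _); apply/val_inj; rewrite /= inordK ?addKn //.
Qed.

Lemma blk_scalar (a b : R) :
  block_mx a%:M 0 0 b%:M = diag_mx (\row_(i < 2+2) (if (i < 2)%N then a else b)).
Proof.
apply/matrixP => i j; rewrite /block_mx !mxE.
case: splitP => i' Hi; rewrite !mxE; case: splitP => j' Hj; rewrite !mxE.
- by rewrite -val_eqE -[i == j]val_eqE /= Hi Hj.
- suff -> : (i == j) = false by [].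
  apply/negbTE; rewrite -val_eqE /= Hi Hj; have := ltn_ord i'; apply: contraTN => /eqP; lia.
- suff -> : (i == j) = false by [].
  apply/negbTE; rewrite -val_eqE /= Hi Hj; have := ltn_ord j'; apply: contraTN => /eqP; lia.
- by rewrite -val_eqE -[i == j]val_eqE /= Hi Hj eqn_add2l.
Qed.

Definition sel (k : nat) (a b : R) := if (k < 2)%N then a else b.

Lemma e4_local2 tA yA tB yB (M : 'M[R]_(2+2)) k l : (k < 4)%N -> (l < 4)%N ->
  e4 (local2 tA yA tB yB M) k l =
  sel k (Num.sqrt tA) (Num.sqrt tB) * e4 M k l * sel l (Num.sqrt tA) (Num.sqrt tB)
  + (if k == l then sel k yA yB else 0).
Proof.
move=> hk hl; rewrite /local2 /gchan !blk_scalar tr_diag_mx mul_diag_mx mul_mx_diag /e4 !mxE /sel !inordK //.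
case: (k =P l) => [->|]; first by rewrite eqxx.
move=> nkl; suff -> : (inord k == inord l :> 'I_(2+2)) = false by rewrite mulr0n addr0.
apply/negbTE; rewrite -val_eqE /= !inordK //; exact/eqP.
Qed.

Definition e2 (M : 'M[R]_2) (k l : nat) := M (inord k) (inord l).
Definition x2 (x : 'cV[R]_2) (k : nat) := x (inord k) 0.

Lemma bform2E (M : 'M[R]_2) (x y : 'cV[R]_2) :
  (x^T *m M *m y) 0 0 =
  x2 x 0 * (e2 M 0 0 * x2 y 0 + e2 M 0 1 * x2 y 1) +
  x2 x 1 * (e2 M 1 0 * x2 y 0 + e2 M 1 1 * x2 y 1).
Proof.
have -> : (x^T *m M *m y) 0 0 = \sum_(i < 2) \sum_(j < 2) x2 x i * e2 M i j * x2 y j.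
  rewrite mxE exchange_big; apply: eq_bigr => j _; rewrite mxE big_distrl /=.
  apply: eq_bigr => i _; rewrite !mxE /x2 /e2 !inord_val.
  by rewrite mulrC mulrA.
rewrite !big_ord_recl !big_ord0 /= /bump /=; ring.
Qed.

Definition vec4 (a b c d : R) : 'cV[R]_(2+2) := \col_(i < 2+2) nth 0 [:: a; b; c; d] i.
Definition vec2 (a b : R) : 'cV[R]_2 := \col_(i < 2) nth 0 [:: a; b] i.

Lemma x4_vec4 a b c d :
  [/\ x4 (vec4 a b c d) 0 = a, x4 (vec4 a b c d) 1 = b,
      x4 (vec4 a b c d) 2 = c & x4 (vec4 a b c d) 3 = d].
Proof. by rewrite /x4 /vec4 !mxE !inordK. Qed.

Lemma x2_vec2 a b : x2 (vec2 a b) 0 = a /\ x2 (vec2 a b) 1 = b.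
Proof. by rewrite /x2 /vec2 !mxE !inordK. Qed.

Lemma omega1E : [/\ e2 (omega1 R) 0 0 = 0, e2 (omega1 R) 0 1 = 1, e2 (omega1 R) 1 0 = -1 & e2 (omega1 R) 1 1 = 0].
Proof. by rewrite /e2 /omega1 !mxE !inordK. Qed.

Lemma omega2_form (x y : 'cV[R]_(2+2)) :
  (x^T *m omega2 R *m y) 0 0 =
  x4 x 0 * x4 y 1 - x4 x 1 * x4 y 0 + (x4 x 2 * x4 y 3 - x4 x 3 * x4 y 2).
Proof.
rewrite bform4E /omega2 !e4_block //=.
have [o00 o01 o10 o11] := omega1E; move: o00 o01 o10 o11; rewrite /e2 => o00 o01 o10 o11.
rewrite o00 o01 o10 o11 !mxE; ring.
Qed.

Lemma omega1_form (x y : 'cV[R]_2) :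
  (x^T *m omega1 R *m y) 0 0 = x2 x 0 * x2 y 1 - x2 x 1 * x2 y 0.
Proof. by rewrite bform2E; have [-> -> -> ->] := omega1E; ring. Qed.

Lemma e4_sub (M N : 'M[R]_(2+2)) k l : e4 (M - N) k l = e4 M k l - e4 N k l.
Proof. by rewrite /e4 !mxE. Qed.
Lemma e2_sub (M N : 'M[R]_2) k l : e2 (M - N) k l = e2 M k l - e2 N k l.
Proof. by rewrite /e2 !mxE. Qed.

Definition mk2 (a b c : R) : 'M[R]_2 :=
  \matrix_(i < 2, j < 2) (if (i == 0 :> nat) then (if (j == 0 :> nat) then a else b)
                          else (if (j == 0 :> nat) then b else c)).

Lemma mk2E a b c :
  [/\ mk2 a b c (inord 0) (inord 0) = a, mk2 a b c (inord 0) (inord 1) = b,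
      mk2 a b c (inord 1) (inord 0) = b & mk2 a b c (inord 1) (inord 1) = c].
Proof. by rewrite /mk2 !mxE !inordK. Qed.


Implicit Types (v : nat -> nat -> R).
Definition Q4 v (x0 x1 x2 x3 : R) :=
  v 0%N 0%N * x0^2 + v 1%N 1%N * x1^2 + v 2%N 2%N * x2^2 + v 3%N 3%N * x3^2 +
  2 * (v 0%N 1%N * x0 * x1 + v 0%N 2%N * x0 * x2 + v 0%N 3%N * x0 * x3 +
       v 1%N 2%N * x1 * x2 + v 1%N 3%N * x1 * x3 + v 2%N 3%N * x2 * x3).
Definition Sy2 (x0 x1 y0 y1 : R) := x0 * y1 - x1 * y0.

Definition Ucov v := forall x0 x1 x2 x3 y0 y1 y2 y3 : R,
  0 <= Q4 v x0 x1 x2 x3 + Q4 v y0 y1 y2 y3 - (Sy2 x0 x1 y0 y1 + Sy2 x2 x3 y2 y3).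

Definition shiftU v (p q : R) : nat -> nat -> R := fun k l =>
  v k l + (if k == l then (if (k < 2)%N then (1 - p) / 2 else (1 - q) / 2) else 0).

Lemma Q4_shift v p q x0 x1 x2 x3 :
  Q4 (shiftU v p q) x0 x1 x2 x3 =
  Q4 v x0 x1 x2 x3 + (1 - p) / 2 * (x0^2 + x1^2) + (1 - q) / 2 * (x2^2 + x3^2).
Proof. rewrite /Q4 /shiftU /=; ring. Qed.

Lemma L1A v p q : Ucov v -> 0 < p -> 0 < q -> p + q <= 1 ->
  forall x0 x1 x2 x3 y0 y1 y2 y3 : R,
  0 <= Q4 (shiftU v p q) x0 x1 x2 x3 + Q4 (shiftU v p q) y0 y1 y2 y3
       - (p + q) * Sy2 x0 x1 y0 y1.
Proof.
move=> H hp hq hpq x0 x1 x2 x3 y0 y1 y2 y3.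
set th := 2 * p + q - 1.
have h1 := H x0 x1 x2 x3 y0 y1 y2 y3.
have h2 := H x0 x1 x2 x3 (-y0) (-y1) (-y2) (-y3).
have c1 : 0 <= (1 + th) / 2 by rewrite /th; lra.
have c2 : 0 <= (1 - th) / 2 by rewrite /th; lra.
have c3 : 0 <= (1 - p) / 2 by lra.
have c4 : 0 <= (1 - q + th) / 4 by rewrite /th; lra.
have c5 : 0 <= (1 - q - th) / 4 by rewrite /th; lra.
have k1 := mulr_ge0 c1 h1.
have k2 := mulr_ge0 c2 h2.
have k3 := mulr_ge0 c3 (addr_ge0 (sqr_ge0 (x0 - y1)) (sqr_ge0 (x1 + y0))).
have k4 := mulr_ge0 c4 (addr_ge0 (sqr_ge0 (x2 + y3)) (sqr_ge0 (x3 - y2))).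
have k5 := mulr_ge0 c5 (addr_ge0 (sqr_ge0 (x2 - y3)) (sqr_ge0 (x3 + y2))).
rewrite !Q4_shift.
move: k1 k2 k3 k4 k5; rewrite /Q4 /Sy2 /th => k1 k2 k3 k4 k5.
lra.
Qed.

Lemma L1B v p q : Ucov v -> 0 < p -> 0 < q -> p + q <= 1 ->
  forall x0 x1 x2 x3 y0 y1 y2 y3 : R,
  0 <= Q4 (shiftU v p q) x0 x1 x2 x3 + Q4 (shiftU v p q) y0 y1 y2 y3
       - (p + q) * Sy2 x2 x3 y2 y3.
Proof.
move=> H hp hq hpq x0 x1 x2 x3 y0 y1 y2 y3.
set th := p + 2 * q - 1.
have h1 := H x0 x1 x2 x3 y0 y1 y2 y3.
have h2 := H x0 x1 x2 x3 (-y0) (-y1) (-y2) (-y3).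
have c1 : 0 <= (1 + th) / 2 by rewrite /th; lra.
have c2 : 0 <= (1 - th) / 2 by rewrite /th; lra.
have c3 : 0 <= (1 - q) / 2 by lra.
have c4 : 0 <= (1 - p + th) / 4 by rewrite /th; lra.
have c5 : 0 <= (1 - p - th) / 4 by rewrite /th; lra.
have k1 := mulr_ge0 c1 h1.
have k2 := mulr_ge0 c2 h2.
have k3 := mulr_ge0 c3 (addr_ge0 (sqr_ge0 (x2 - y3)) (sqr_ge0 (x3 + y2))).
have k4 := mulr_ge0 c4 (addr_ge0 (sqr_ge0 (x0 + y1)) (sqr_ge0 (x1 - y0))).
have k5 := mulr_ge0 c5 (addr_ge0 (sqr_ge0 (x0 - y1)) (sqr_ge0 (x1 + y0))).
rewrite !Q4_shift.
move: k1 k2 k3 k4 k5; rewrite /Q4 /Sy2 /th => k1 k2 k3 k4 k5.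
lra.
Qed.

(* Schur complements, scaled by determinants *)
Definition detB (u : nat -> nat -> R) := u 2%N 2%N * u 3%N 3%N - u 2%N 3%N ^ 2.
Definition detA (u : nat -> nat -> R) := u 0%N 0%N * u 1%N 1%N - u 0%N 1%N ^ 2.
Definition SA00 u := detB u * u 0%N 0%N - (u 0%N 2%N ^ 2 * u 3%N 3%N - 2 * u 0%N 2%N * u 0%N 3%N * u 2%N 3%N + u 0%N 3%N ^ 2 * u 2%N 2%N).
Definition SA01 u := detB u * u 0%N 1%N - (u 0%N 2%N * u 1%N 2%N * u 3%N 3%N - u 0%N 2%N * u 1%N 3%N * u 2%N 3%N - u 0%N 3%N * u 1%N 2%N * u 2%N 3%N + u 0%N 3%N * u 1%N 3%N * u 2%N 2%N).
Definition SA11 u := detB u * u 1%N 1%N - (u 1%N 2%N ^ 2 * u 3%N 3%N - 2 * u 1%N 2%N * u 1%N 3%N * u 2%N 3%N + u 1%N 3%N ^ 2 * u 2%N 2%N).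
Definition SB00 u := detA u * u 2%N 2%N - (u 0%N 2%N ^ 2 * u 1%N 1%N - 2 * u 0%N 2%N * u 1%N 2%N * u 0%N 1%N + u 1%N 2%N ^ 2 * u 0%N 0%N).
Definition SB01 u := detA u * u 2%N 3%N - (u 0%N 2%N * u 0%N 3%N * u 1%N 1%N - u 0%N 2%N * u 1%N 3%N * u 0%N 1%N - u 1%N 2%N * u 0%N 3%N * u 0%N 1%N + u 1%N 2%N * u 1%N 3%N * u 0%N 0%N).
Definition SB11 u := detA u * u 3%N 3%N - (u 0%N 3%N ^ 2 * u 1%N 1%N - 2 * u 0%N 3%N * u 1%N 3%N * u 0%N 1%N + u 1%N 3%N ^ 2 * u 0%N 0%N).
Definition qf2 (a b c x0 x1 : R) := a * x0^2 + 2 * b * x0 * x1 + c * x1^2.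

Lemma schurA_id u a0 a1 b0 b1 :
  let t0 := u 0%N 2%N * a0 + u 1%N 2%N * a1 in
  let t1 := u 0%N 3%N * a0 + u 1%N 3%N * a1 in
  let r0 := detB u * b0 + u 3%N 3%N * t0 - u 2%N 3%N * t1 in
  let r1 := detB u * b1 - u 2%N 3%N * t0 + u 2%N 2%N * t1 in
  detB u ^ 2 * Q4 u a0 a1 b0 b1 =
  detB u * qf2 (SA00 u) (SA01 u) (SA11 u) a0 a1 + qf2 (u 2%N 2%N) (u 2%N 3%N) (u 3%N 3%N) r0 r1.
Proof. rewrite /= /Q4 /qf2 /SA00 /SA01 /SA11 /detB; ring. Qed.

Lemma schurB_id u a0 a1 b0 b1 :
  let t0 := u 0%N 2%N * b0 + u 0%N 3%N * b1 in
  let t1 := u 1%N 2%N * b0 + u 1%N 3%N * b1 in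
  let r0 := detA u * a0 + u 1%N 1%N * t0 - u 0%N 1%N * t1 in
  let r1 := detA u * a1 - u 0%N 1%N * t0 + u 0%N 0%N * t1 in
  detA u ^ 2 * Q4 u a0 a1 b0 b1 =
  detA u * qf2 (SB00 u) (SB01 u) (SB11 u) b0 b1 + qf2 (u 0%N 0%N) (u 0%N 1%N) (u 1%N 1%N) r0 r1.
Proof. rewrite /= /Q4 /qf2 /SB00 /SB01 /SB11 /detA; ring. Qed.

Lemma core u cA cB y0 y1 y2 y3 :
  0 < detA u -> 0 < detB u ->
  (forall r0 r1, 0 <= qf2 (u 0%N 0%N) (u 0%N 1%N) (u 1%N 1%N) r0 r1) ->
  (forall r0 r1, 0 <= qf2 (u 2%N 2%N) (u 2%N 3%N) (u 3%N 3%N) r0 r1) ->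
  0 <= cA -> 0 <= cB -> cA + cB = 1 ->
  0 <= Q4 u y0 y1 y2 y3
       - cA * qf2 (SA00 u / detB u) (SA01 u / detB u) (SA11 u / detB u) y0 y1
       - cB * qf2 (SB00 u / detA u) (SB01 u / detA u) (SB11 u / detA u) y2 y3.
Proof.
move=> hA hB pA pB cA0 cB0 hc.
have eA := schurA_id u y0 y1 y2 y3; have eB := schurB_id u y0 y1 y2 y3.
rewrite /= in eA eB.
move: eA eB; set rA := qf2 (u 2%N 2%N) _ _ _ _; set rB := qf2 (u 0%N 0%N) _ _ _ _ => eA eB.
have hrA : 0 <= rA by apply: pB.
have hrB : 0 <= rB by apply: pA.
have qA : Q4 u y0 y1 y2 y3 - qf2 (SA00 u / detB u) (SA01 u / detB u) (SA11 u / detB u) y0 y1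
          = rA / detB u ^ 2.
  apply: (mulfI (x := detB u ^ 2)); first by rewrite expf_eq0 /= gt_eqF.
  rewrite mulrBr eA mulrCA mulfV ?mulr1; last by rewrite expf_eq0 /= gt_eqF.
  rewrite /qf2; field; by rewrite gt_eqF.
have qB : Q4 u y0 y1 y2 y3 - qf2 (SB00 u / detA u) (SB01 u / detA u) (SB11 u / detA u) y2 y3
          = rB / detA u ^ 2.
  apply: (mulfI (x := detA u ^ 2)); first by rewrite expf_eq0 /= gt_eqF.
  rewrite mulrBr eB mulrCA mulfV ?mulr1; last by rewrite expf_eq0 /= gt_eqF.
  rewrite /qf2; field; by rewrite gt_eqF.
have -> : Q4 u y0 y1 y2 y3
       - cA * qf2 (SA00 u / detB u) (SA01 u / detB u) (SA11 u / detB u) y0 y1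
       - cB * qf2 (SB00 u / detA u) (SB01 u / detA u) (SB11 u / detA u) y2 y3
   = cA * (rA / detB u ^ 2) + cB * (rB / detA u ^ 2).
  rewrite -qA -qB; have -> : cB = 1 - cA by lra.
  ring.
by apply: addr_ge0; apply: mulr_ge0 => //; apply: divr_ge0 => //; apply: exprn_ge0; apply: ltW.
Qed.

Lemma covA u p q kA lA :
  (forall x0 x1 x2 x3 y0 y1 y2 y3 : R,
     0 <= Q4 u x0 x1 x2 x3 + Q4 u y0 y1 y2 y3 - (p + q) * Sy2 x0 x1 y0 y1) ->
  0 < detB u -> 0 <= kA -> 0 <= lA -> kA * (p + q) + lA = 1 ->
  forall y0 y1 z0 z1,
  0 <= qf2 (kA * (SA00 u / detB u) + lA / 2) (kA * (SA01 u / detB u))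
           (kA * (SA11 u / detB u) + lA / 2) y0 y1
     + qf2 (kA * (SA00 u / detB u) + lA / 2) (kA * (SA01 u / detB u))
           (kA * (SA11 u / detB u) + lA / 2) z0 z1
     - Sy2 y0 y1 z0 z1.
Proof.
move=> L hB hk hl hkl y0 y1 z0 z1.
set b := detB u.
pose X0 (y0 y1 : R) := b * y0. pose X1 (y0 y1 : R) := b * y1.
pose X2 (y0 y1 : R) := - (u 3%N 3%N * (u 0%N 2%N * y0 + u 1%N 2%N * y1) - u 2%N 3%N * (u 0%N 3%N * y0 + u 1%N 3%N * y1)).
pose X3 (y0 y1 : R) := - (- u 2%N 3%N * (u 0%N 2%N * y0 + u 1%N 2%N * y1) + u 2%N 2%N * (u 0%N 3%N * y0 + u 1%N 3%N * y1)).
have QX : forall y0 y1, Q4 u (X0 y0 y1) (X1 y0 y1) (X2 y0 y1) (X3 y0 y1)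
                        = b * qf2 (SA00 u) (SA01 u) (SA11 u) y0 y1.
  by move=> a0 a1; rewrite /Q4 /qf2 /X0 /X1 /X2 /X3 /b /SA00 /SA01 /SA11 /detB; ring.
have h := L (X0 y0 y1) (X1 y0 y1) (X2 y0 y1) (X3 y0 y1) (X0 z0 z1) (X1 z0 z1) (X2 z0 z1) (X3 z0 z1).
rewrite !QX /Sy2 /X0 /X1 in h.
have h2 : 0 <= kA / b ^ 2 * (b * qf2 (SA00 u) (SA01 u) (SA11 u) y0 y1 +
         b * qf2 (SA00 u) (SA01 u) (SA11 u) z0 z1 - (p + q) * (b * y0 * (b * z1) - b * y1 * (b * z0))).
  by apply: mulr_ge0 => //; apply: divr_ge0 => //; apply: exprn_ge0; apply: ltW.
have h3 : 0 <= lA / 2 * ((y0 - z1) ^ 2 + (y1 + z0) ^ 2).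
  by apply: mulr_ge0; [lra | apply: addr_ge0; apply: sqr_ge0].
have -> : qf2 (kA * (SA00 u / b) + lA / 2) (kA * (SA01 u / b)) (kA * (SA11 u / b) + lA / 2) y0 y1
     + qf2 (kA * (SA00 u / b) + lA / 2) (kA * (SA01 u / b)) (kA * (SA11 u / b) + lA / 2) z0 z1
     - Sy2 y0 y1 z0 z1
   = kA / b ^ 2 * (b * qf2 (SA00 u) (SA01 u) (SA11 u) y0 y1 +
         b * qf2 (SA00 u) (SA01 u) (SA11 u) z0 z1 - (p + q) * (b * y0 * (b * z1) - b * y1 * (b * z0)))
     + lA / 2 * ((y0 - z1) ^ 2 + (y1 + z0) ^ 2).
  have -> : lA = 1 - kA * (p + q) by lra.
  rewrite /qf2 /Sy2; field; by rewrite /b gt_eqF.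
exact: addr_ge0.
Qed.

Lemma covB u p q kB lB :
  (forall x0 x1 x2 x3 y0 y1 y2 y3 : R,
     0 <= Q4 u x0 x1 x2 x3 + Q4 u y0 y1 y2 y3 - (p + q) * Sy2 x2 x3 y2 y3) ->
  0 < detA u -> 0 <= kB -> 0 <= lB -> kB * (p + q) + lB = 1 ->
  forall y0 y1 z0 z1,
  0 <= qf2 (kB * (SB00 u / detA u) + lB / 2) (kB * (SB01 u / detA u))
           (kB * (SB11 u / detA u) + lB / 2) y0 y1
     + qf2 (kB * (SB00 u / detA u) + lB / 2) (kB * (SB01 u / detA u))
           (kB * (SB11 u / detA u) + lB / 2) z0 z1
     - Sy2 y0 y1 z0 z1.
Proof.
move=> L hA hk hl hkl y0 y1 z0 z1.
set b := detA u.
pose X2 (y0 y1 : R) := b * y0. pose X3 (y0 y1 : R) := b * y1.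
pose X0 (y0 y1 : R) := - (u 1%N 1%N * (u 0%N 2%N * y0 + u 0%N 3%N * y1) - u 0%N 1%N * (u 1%N 2%N * y0 + u 1%N 3%N * y1)).
pose X1 (y0 y1 : R) := - (- u 0%N 1%N * (u 0%N 2%N * y0 + u 0%N 3%N * y1) + u 0%N 0%N * (u 1%N 2%N * y0 + u 1%N 3%N * y1)).
have QX : forall y0 y1, Q4 u (X0 y0 y1) (X1 y0 y1) (X2 y0 y1) (X3 y0 y1)
                        = b * qf2 (SB00 u) (SB01 u) (SB11 u) y0 y1.
  by move=> a0 a1; rewrite /Q4 /qf2 /X0 /X1 /X2 /X3 /b /SB00 /SB01 /SB11 /detA; ring.
have h := L (X0 y0 y1) (X1 y0 y1) (X2 y0 y1) (X3 y0 y1) (X0 z0 z1) (X1 z0 z1) (X2 z0 z1) (X3 z0 z1).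
rewrite !QX /Sy2 /X2 /X3 in h.
have h2 : 0 <= kB / b ^ 2 * (b * qf2 (SB00 u) (SB01 u) (SB11 u) y0 y1 +
         b * qf2 (SB00 u) (SB01 u) (SB11 u) z0 z1 - (p + q) * (b * y0 * (b * z1) - b * y1 * (b * z0))).
  by apply: mulr_ge0 => //; apply: divr_ge0 => //; apply: exprn_ge0; apply: ltW.
have h3 : 0 <= lB / 2 * ((y0 - z1) ^ 2 + (y1 + z0) ^ 2).
  by apply: mulr_ge0; [lra | apply: addr_ge0; apply: sqr_ge0].
have -> : qf2 (kB * (SB00 u / b) + lB / 2) (kB * (SB01 u / b)) (kB * (SB11 u / b) + lB / 2) y0 y1
     + qf2 (kB * (SB00 u / b) + lB / 2) (kB * (SB01 u / b)) (kB * (SB11 u / b) + lB / 2) z0 z1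
     - Sy2 y0 y1 z0 z1
   = kB / b ^ 2 * (b * qf2 (SB00 u) (SB01 u) (SB11 u) y0 y1 +
         b * qf2 (SB00 u) (SB01 u) (SB11 u) z0 z1 - (p + q) * (b * y0 * (b * z1) - b * y1 * (b * z0)))
     + lB / 2 * ((y0 - z1) ^ 2 + (y1 + z0) ^ 2).
  have -> : lB = 1 - kB * (p + q) by lra.
  rewrite /qf2 /Sy2; field; by rewrite /b gt_eqF.
exact: addr_ge0.
Qed.


Lemma e4_sym (V : 'M[R]_(2+2)) : V^T = V -> forall k l, e4 V k l = e4 V l k.
Proof. by move=> HT k l; rewrite /e4 -[in LHS]HT mxE. Qed.

Lemma cov2_scalar (V : 'M[R]_(2+2)) : is_cov2 V -> Ucov (e4 V).
Proof.
move=> [HT Hc] x0 x1 x2 x3 y0 y1 y2 y3.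
have := Hc (vec4 x0 x1 x2 x3) (vec4 y0 y1 y2 y3).
rewrite /qform omega2_form !bform4E.
have [-> -> -> ->] := x4_vec4 x0 x1 x2 x3.
have [-> -> -> ->] := x4_vec4 y0 y1 y2 y3.
rewrite (e4_sym V HT 1 0) (e4_sym V HT 2 0) (e4_sym V HT 3 0) (e4_sym V HT 2 1) (e4_sym V HT 3 1) (e4_sym V HT 3 2).
rewrite /Q4 /Sy2 => h; lra.
Qed.

Lemma cov1_mk2 a b c :
  (forall y0 y1 z0 z1, 0 <= qf2 a b c y0 y1 + qf2 a b c z0 z1 - Sy2 y0 y1 z0 z1) ->
  is_cov1 (mk2 a b c).
Proof.
move=> H; split.
  apply/matrixP => i j; rewrite !mxE.
  by case: i => [[|[|i]] hi] //; case: j => [[|[|j]] hj].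
move=> x y; rewrite /qform omega1_form !bform2E /e2.
have [-> -> -> ->] := mk2E a b c.
have := H (x2 x 0) (x2 x 1) (x2 y 0) (x2 y 1).
rewrite /qf2 /Sy2 => h; lra.
Qed.

Lemma detpos (m00 m01 m11 e : R) :
  (forall r0 r1, 0 <= qf2 m00 m01 m11 r0 r1) -> 0 < e ->
  0 < (m00 + e) * (m11 + e) - m01 ^ 2.
Proof.
move=> H he.
have h0 := H 1 0; have h := H m01 (- (m00 + e)).
rewrite /qf2 in h0 h.
have a0 : 0 < m00 + e by lra.
have k : 0 < e * (m00 + e) ^ 2 by apply: mulr_gt0 => //; apply: exprn_gt0.
have k2 : 0 <= e * m01 ^ 2 by apply: mulr_ge0; [lra | apply: sqr_ge0].
have : 0 < (m00 + e) * ((m00 + e) * (m11 + e) - m01 ^ 2) by lra.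
by rewrite pmulr_rgt0.
Qed.

Lemma sqrt_simpl (d : R) : 0 <= d -> Num.sqrt (1 - (1 - d ^ 2)) = d /\ Num.sqrt (d ^ 2) = d.
Proof.
move=> hd; have -> : 1 - (1 - d ^ 2) = d ^ 2 by ring.
by rewrite sqrtr_sqr ger0_norm.
Qed.

Lemma if_dir (dA dB sa sb : R) : 0 < dA -> 0 < dB -> dA ^ 2 <= 1 -> dB ^ 2 <= 1 ->
  0 < sa -> 0 < sb -> (sa ^ 2)^-1 + (sb ^ 2)^-1 <= 1 ->
  forall V, is_cov2 V ->
  separable2 (loss2 (1 - dA ^ 2) (1 - dB ^ 2) (amp2 (sa ^ 2) (sb ^ 2) V)).
Proof.
move=> hdA hdB hdA1 hdB1 hsa hsb hpq V HV.
set p := (sa ^ 2)^-1; set q := (sb ^ 2)^-1.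
have hp : 0 < p by rewrite /p invr_gt0 exprn_gt0.
have hq : 0 < q by rewrite /q invr_gt0 exprn_gt0.
have hpq' : p + q <= 1 := hpq.
have HU := cov2_scalar V HV.
have L1a := L1A _ _ _ HU hp hq hpq.
have L1b := L1B _ _ _ HU hp hq hpq.
have psdV : forall r0 r1 r2 r3, 0 <= Q4 (e4 V) r0 r1 r2 r3.
  move=> r0 r1 r2 r3; have := HU r0 r1 r2 r3 0 0 0 0; rewrite /Q4 /Sy2 => h; lra.
set u := shiftU (e4 V) p q.
have pA : forall r0 r1, 0 <= qf2 (u 0%N 0%N) (u 0%N 1%N) (u 1%N 1%N) r0 r1.
  move=> r0 r1; have := psdV r0 r1 0 0.
  have k : 0 <= (1 - p) / 2 * (r0 ^ 2 + r1 ^ 2) by apply: mulr_ge0; [lra | apply: addr_ge0; apply: sqr_ge0].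
  rewrite /qf2 /Q4 /u /shiftU /= => h; lra.
have pB : forall r0 r1, 0 <= qf2 (u 2%N 2%N) (u 2%N 3%N) (u 3%N 3%N) r0 r1.
  move=> r0 r1; have := psdV 0 0 r0 r1.
  have k : 0 <= (1 - q) / 2 * (r0 ^ 2 + r1 ^ 2) by apply: mulr_ge0; [lra | apply: addr_ge0; apply: sqr_ge0].
  rewrite /qf2 /Q4 /u /shiftU /= => h; lra.
have dApos : 0 < detA u.
  rewrite /detA /u /shiftU /= addr0; apply: detpos; last by lra.
  move=> r0 r1; have := psdV r0 r1 0 0; rewrite /qf2 /Q4 => h; lra.
have dBpos : 0 < detB u.
  rewrite /detB /u /shiftU /= addr0; apply: detpos; last by lra.
  move=> r0 r1; have := psdV 0 0 r0 r1; rewrite /qf2 /Q4 => h; lra.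
have hpq0 : 0 < p + q by lra.
set kA := dA ^ 2 / (p + q); set kB := dB ^ 2 / (p + q).
have hkA : 0 <= kA by apply: divr_ge0; [apply: sqr_ge0 | lra].
have hkB : 0 <= kB by apply: divr_ge0; [apply: sqr_ge0 | lra].
have ekA : kA * (p + q) + (1 - dA ^ 2) = 1 by rewrite /kA; field; rewrite gt_eqF.
have ekB : kB * (p + q) + (1 - dB ^ 2) = 1 by rewrite /kB; field; rewrite gt_eqF.
exists (mk2 (kA * (SA00 u / detB u) + (1 - dA ^ 2) / 2) (kA * (SA01 u / detB u))
            (kA * (SA11 u / detB u) + (1 - dA ^ 2) / 2)).
exists (mk2 (kB * (SB00 u / detA u) + (1 - dB ^ 2) / 2) (kB * (SB01 u / detA u))
            (kB * (SB11 u / detA u) + (1 - dB ^ 2) / 2)).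
split; first by apply: cov1_mk2; apply: covA => //; lra.
split; first by apply: cov1_mk2; apply: covB => //; lra.
move=> x.
rewrite /qform bform4E !e4_sub /loss2 /amp2 !e4_local2 // !e4_block //=.
have [-> -> -> ->] := mk2E (kA * (SA00 u / detB u) + (1 - dA ^ 2) / 2) (kA * (SA01 u / detB u))
            (kA * (SA11 u / detB u) + (1 - dA ^ 2) / 2).
have [-> -> -> ->] := mk2E (kB * (SB00 u / detA u) + (1 - dB ^ 2) / 2) (kB * (SB01 u / detA u))
            (kB * (SB11 u / detA u) + (1 - dB ^ 2) / 2).
rewrite !mxE /sel /=.
have [-> _] := sqrt_simpl dA (ltW hdA); have [-> _] := sqrt_simpl dB (ltW hdB).
have [_ ->] := sqrt_simpl sa (ltW hsa); have [_ ->] := sqrt_simpl sb (ltW hsb).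
have HT := proj1 HV.
rewrite (e4_sym V HT 1 0) (e4_sym V HT 2 0) (e4_sym V HT 3 0) (e4_sym V HT 2 1) (e4_sym V HT 3 1) (e4_sym V HT 3 2).
have C := core u (p / (p + q)) (q / (p + q)) (dA * sa * x4 x 0) (dA * sa * x4 x 1)
   (dB * sb * x4 x 2) (dB * sb * x4 x 3) dApos dBpos pA pB.
have cA0 : 0 <= p / (p + q) by apply: divr_ge0; lra.
have cB0 : 0 <= q / (p + q) by apply: divr_ge0; lra.
have cAB : p / (p + q) + q / (p + q) = 1 by field; rewrite gt_eqF.
move: {C cA0 cB0 cAB}(C cA0 cB0 cAB).
rewrite /Q4 /u /shiftU /=.
set s0 := SA00 _ / _; set s1 := SA01 _ / _; set s2 := SA11 _ / _.
set t0 := SB00 _ / _; set t1 := SB01 _ / _; set t2 := SB11 _ / _.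
move=> C; apply: (le_trans C); rewrite le_eqVlt; apply/orP; left; apply/eqP.
rewrite /kA /kB /p /q /qf2.
field.
by apply/and3P; split; apply/lt0r_neq0 => //; apply: addr_gt0; apply: exprn_gt0.
Qed.

Definition tmf (e : R) (i j : nat) : R :=
  if i == j then (e + e^-1) / 4 else if (i + j == 2)%N then (e^-1 - e) / 4
  else if (i + j == 4)%N then - ((e^-1 - e) / 4) else 0.
Definition tm (e : R) : 'M[R]_(2+2) := \matrix_(i < 2+2, j < 2+2) tmf e i j.

Lemma tmE e k l : (k < 4)%N -> (l < 4)%N -> e4 (tm e) k l = tmf e k l.
Proof. by move=> hk hl; rewrite /e4 /tm mxE !inordK. Qed.

Lemma tm_cov e : 0 < e -> is_cov2 (tm e).
Proof.
move=> he; split.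
  apply/matrixP => i j; rewrite !mxE /tmf eq_sym addnC //.
move=> x y; rewrite /qform omega2_form !bform4E !tmE // /tmf /=.
set x0 := x4 x 0; set x1 := x4 x 1; set x2' := x4 x 2; set x3 := x4 x 3.
set y0 := x4 y 0; set y1 := x4 y 1; set y2 := x4 y 2; set y3 := x4 y 3.
set a := e^-1.
have ha : 0 < a by rewrite invr_gt0.
have h : 0 <= (1 / (4 * a)) * ((a * (x0 + x2') - (y1 + y3)) ^ 2 + ((x0 - x2') - a * (y1 - y3)) ^ 2
            + ((x1 + x3) + a * (y0 + y2)) ^ 2 + (a * (x1 - x3) + (y0 - y2)) ^ 2).
  apply: mulr_ge0; first by rewrite divr_ge0 //; lra.
  by rewrite !addr_ge0 // sqr_ge0.
apply: (le_trans h); rewrite le_eqVlt; apply/orP; left; apply/eqP.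
rewrite /a; field; by rewrite gt_eqF.
Qed.

Lemma onlyif_dir (dA dB sa sb : R) : 0 < dA -> 0 < dB -> 0 < sa -> 0 < sb ->
  1 < (sa ^ 2)^-1 + (sb ^ 2)^-1 ->
  ~ separable2 (loss2 (1 - dA ^ 2) (1 - dB ^ 2) (amp2 (sa ^ 2) (sb ^ 2)
        (tm (((sa ^ 2)^-1 + (sb ^ 2)^-1 - 1) / 2)))).
Proof.
move=> hdA hdB hsa hsb hpq [gA [gB [[_ cA] [[_ cB] hge]]]].
set e := ((sa ^ 2)^-1 + (sb ^ 2)^-1 - 1) / 2.
have he : 0 < e by rewrite /e; lra.
set X1 := dB * sb; set X3 := dA * sa.
have h1 := hge (vec4 X1 0 (- X3) 0).
have h2 := hge (vec4 0 X1 0 X3).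
have hA := cA (vec2 X1 0) (vec2 0 X1).
have hB := cB (vec2 (- X3) 0) (vec2 0 (- X3)).
move: h1 h2; rewrite /qform !bform4E !e4_sub /loss2 /amp2 !e4_local2 // !e4_block //= !tmE //.
have [-> -> -> ->] := x4_vec4 X1 0 (- X3) 0.
have [-> -> -> ->] := x4_vec4 0 X1 0 X3.
rewrite !mxE /sel /tmf /=.
have [-> _] := sqrt_simpl dA (ltW hdA); have [-> _] := sqrt_simpl dB (ltW hdB).
have [_ ->] := sqrt_simpl sa (ltW hsa); have [_ ->] := sqrt_simpl sb (ltW hsb).
move=> h1 h2.
move: hA hB; rewrite /qform !omega1_form !bform2E.
have [-> ->] := x2_vec2 X1 0; have [-> ->] := x2_vec2 0 X1.
have [-> ->] := x2_vec2 (- X3) 0; have [-> ->] := x2_vec2 0 (- X3).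
rewrite /e2 => hA hB.
have hS := addr_ge0 (addr_ge0 h1 h2) (addr_ge0 hA hB).
set T := dA ^ 2 * dB ^ 2 * sa ^ 2 * sb ^ 2 * (1 - ((sa ^ 2)^-1 + (sb ^ 2)^-1)).
have hT : T < 0.
  rewrite /T pmulr_rlt0; first by lra.
  by rewrite !mulr_gt0 // exprn_gt0.
have : 0 <= T.
  apply: (le_trans hS); rewrite le_eqVlt; apply/orP; left; apply/eqP.
  rewrite /T /X1 /X3 /e; field.
  apply/and3P; split; try exact: lt0r_neq0.
  apply/lt0r_neq0.
  have -> : sb ^+ 2 + sa ^+ 2 + -1 * (sa * sb) ^+ 2
          = (sa * sb) ^+ 2 * ((sa ^ 2)^-1 + (sb ^ 2)^-1 - 1).
    by field; apply/andP; split; exact: lt0r_neq0.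
  apply: mulr_gt0; last by lra.
  by apply: exprn_gt0; apply: mulr_gt0.
move=> h; lra.
Qed.
End Helpers.

Theorem proposition8 (R : rcfType) (aA aB lA lB : R) :
  1 <= aA -> 1 <= aB -> 0 <= lA -> lA < 1 -> 0 <= lB -> lB < 1 ->
  ((forall V : 'M[R]_(2 + 2), is_cov2 V -> separable2 (loss2 lA lB (amp2 aA aB V)))
   <-> aA^-1 + aB^-1 <= 1).
Proof.
move=> haA haB hlA0 hlA1 hlB0 hlB1.
have [dA hdA EA] : exists2 d : R, 0 < d & lA = 1 - d ^ 2.
  exists (Num.sqrt (1 - lA)); first by rewrite sqrtr_gt0; lra.
  by rewrite (_ : forall x : R, x ^ 2 = x ^+ 2) // sqr_sqrtr; [ring | lra].
have [dB hdB EB] : exists2 d : R, 0 < d & lB = 1 - d ^ 2.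
  exists (Num.sqrt (1 - lB)); first by rewrite sqrtr_gt0; lra.
  by rewrite (_ : forall x : R, x ^ 2 = x ^+ 2) // sqr_sqrtr; [ring | lra].
have [sa hsa EsA] : exists2 d : R, 0 < d & aA = d ^ 2.
  exists (Num.sqrt aA); first by rewrite sqrtr_gt0; lra.
  by rewrite (_ : forall x : R, x ^ 2 = x ^+ 2) // sqr_sqrtr; lra.
have [sb hsb EsB] : exists2 d : R, 0 < d & aB = d ^ 2.
  exists (Num.sqrt aB); first by rewrite sqrtr_gt0; lra.
  by rewrite (_ : forall x : R, x ^ 2 = x ^+ 2) // sqr_sqrtr; lra.
subst lA lB aA aB.
split.
- move=> H; rewrite leNgt; apply/negP => hlt.
  apply: (@onlyif_dir R _ _ _ _ hdA hdB hsa hsb hlt); apply: H; apply: tm_cov; lra.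
- move=> hpq; apply: if_dir => //; lra.
Qed.
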